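(* Let $p$ be an odd prime, $e\ge1$, and let $\mathcal M$ be an orientably-regular embedding of $K_{p[p^e]}$ with $G=\mathrm{Aut}^+(\mathcal M)$ and $H\trianglelefteq G$ the subgroup of automorphisms preserving each of the $p$ parts setwise. Suppose $H=\langle x,z\rangle$ has presentation $\langle x,z\mid x^{p^e}=z^{p^e}=1,\ z^x=z^q\rangle$ with $q=1+p^f$ for some $f\in\{1,\dots,e\}$. Then $N:=\langle x^{p^{e-f}},z\rangle$ is a normal subgroup of $G$.
   Context: $K_{m[n]}$ is the complete multipartite graph with $m$ parts of $n$ vertices each; an orientably-regular embedding of it is an orientable map with this underlying graph whose group $\mathrm{Aut}^+(\mathcal M)$ of orientation-preserving automorphisms acts regularly on arcs. Conjugation is $z^x=x^{-1}zx$. *)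

(* Defs.v *)
From mathcomp Require Import all_boot all_fingroup.
Set Implicit Arguments. Unset Strict Implicit. Unset Printing Implicit Defensive.
Local Open Scope group_scope.

(* Combinatorial orientable maps: a finite set of darts (arcs) D, a rotation
   R (cyclic permutation of the darts around each vertex) and an
   arc-reversing involution L.  [tl d] is the initial vertex of the dart d,
   with vertices of K_{m[n]} labelled (part, index) in 'I_m * 'I_n. *)

Definition is_Kmn_map (m n : nat) (D : finType) (R L : {perm D})
    (tl : D -> 'I_m * 'I_n) : Prop :=
  (forall d, L (L d) = d) /\
  [/\
      forall d, tl (R d) = tl d,
      forall d d', tl d = tl d' -> exists k, (R ^+ k) d = d',
      forall u, exists d, tl d = u,
      forall d, (tl d).1 != (tl (L d)).1 &
      forall u v, u.1 != v.1 -> #|[set d | (tl d == u) && (tl (L d) == v)]| = 1%N].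

Definition autp (D : finType) (R L : {perm D}) : {group {perm D}} :=
  'C([set R; L])%G.

Definition orientably_regular (D : finType) (R L : {perm D}) : Prop :=
  [transitive autp R L, on [set: D] | 'P] /\
  forall d : D, 'C_(autp R L)[d | 'P] = 1.

Definition part_stab (m n : nat) (D : finType) (R L : {perm D})
    (tl : D -> 'I_m * 'I_n) : {set {perm D}} :=
  [set g in autp R L | [forall d, (tl (g d)).1 == (tl d).1]].

(* Main.v *)
Require Import Defs.
From mathcomp Require Import all_boot all_fingroup all_algebra all_solvable zify.
Set Implicit Arguments. Unset Strict Implicit. Unset Printing Implicit Defensive.

Lemma arith (p f j : nat) : prime p -> 0 < f -> p ^ (f + j) %| ((1 + p ^ f) ^ (p ^ j)).-1.
Proof.
move=> pp f0; have p1 := prime_gt1 pp.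
elim: j => [|j IH]; first by rewrite addn0 expn0 expn1 add1n.
set a := (1 + p ^ f) ^ (p ^ j) in IH.
have -> : (1 + p ^ f) ^ (p ^ j.+1) = a ^ p by rewrite expnSr expnM.
rewrite predn_exp addnS expnSr dvdn_mul //.
have a0 : 0 < a by rewrite expn_gt0 addn_gt0.
have pa : p %| a.-1.
  apply: dvdn_trans IH; rewrite -{1}(expn1 p) dvdn_exp2l // (leq_trans f0) ?leq_addr //.
have am : a %% p = 1.
  by rewrite -(prednK a0) -addn1 -modnDml (eqP pa) add0n modn_small.
rewrite /dvdn -modn_summ.
have -> : \sum_(i < p) a ^ i %% p = \sum_(i < p) 1.
  by apply: eq_bigr => i _; rewrite -modnXm am exp1n modn_small.
by rewrite sum1_card card_ord modnn.
Qed.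

Local Open Scope group_scope.

Lemma model (p e f : nat) : prime p -> (0 < e)%N -> (0 < f)%N ->
  [set: Extremal.gtype (p ^ e) (p ^ e) (1 + p ^ f)]
         \isog Grp (x : y : x ^+ (p ^ e), y ^+ (p ^ e), x ^ y = x ^+ (1 + p ^ f)).
Proof.
move=> pp e0 f0.
have n1 : (1 < p ^ e)%N by rewrite -(expn0 p) ltn_exp2l ?prime_gt1.
apply: Extremal.Grp => //.
set b := (Zp1 : 'Z_(p ^ e)).
have ob : #[b] = (p ^ e)%N by rewrite order_Zp1 Zp_cast.
have cop : coprime #[b] (1 + p ^ f).
  rewrite ob coprime_pexpl // /coprime -(prednK f0) expnSr addnC gcdnMDl gcdn1 //.
have U : (((1 + p ^ f)%:R)%R : 'Z_#[b]) \is a GRing.unit by rewrite unitZpE // ob.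
pose u : {unit 'Z_#[b]} := Sub ((1 + p ^ f)%:R)%R U.
have vu : val (val u) = ((1 + p ^ f) %% #[b])%N by rewrite /= val_Zp_nat // ob.
pose s := Zp_unitm u.
have sE y : y \in <[b]> -> s y = y ^+ ((1 + p ^ f))%N.
  move=> yb; rewrite /s /Zp_unitm autE //= /cyclem vu expg_mod //.
  by rewrite orderE expg_cardG.
have As : s \in Aut <[b]> by apply: Aut_aut.
exists s; split => //; last by rewrite sE ?cycle_id.
rewrite order_dvdn; apply/eqP; apply: (eq_Aut (groupX _ As) (group1 _)) => y yb.
rewrite perm1.
have sXE k : (s ^+ k) y = y ^+ ((1 + p ^ f) ^ k)%N.
  elim: k => [|k IH]; first by rewrite expg0 perm1 expn0 expg1.
  by rewrite expgSr permM IH sE ?groupX // -expgM -expnSr.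
have yn : y ^+ (p ^ e)%N = 1.
  have := expg_cardG yb; rewrite -orderE => h; move: h; rewrite ob //.
rewrite sXE -(expg_mod _ yn).
have : (p ^ e %| ((1 + p ^ f) ^ p ^ e).-1)%N.
  apply: dvdn_trans (arith e pp f0); apply: dvdn_exp2l; exact: leq_addl.
have q0 : (0 < (1 + p ^ f) ^ p ^ e)%N by rewrite expn_gt0 addn_gt0.
move=> /dvdnP [k hk].
have -> : ((1 + p ^ f) ^ p ^ e = k * p ^ e + 1)%N by rewrite -hk addn1 prednK.
by rewrite modnMDl modn_small // expg1.
Qed.

Lemma card_bound (p e f : nat) (gT : finGroupType) (G : {group gT}) :
  prime p -> (0 < e)%N -> (0 < f)%N ->
  G \isog Grp (a : b : (a ^+ (p ^ e), b ^+ (p ^ e), b ^ a = b ^+ (1 + p ^ f))) ->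
  (p ^ e * p ^ e <= #|G|)%N.
Proof.
move=> pp e0 f0 hI.
have n1 : (1 < p ^ e)%N by rewrite -(expn0 p) ltn_exp2l ?prime_gt1.
have hM := isoGrp_hom (model pp e0 f0).
have hM' : [set: Extremal.gtype (p ^ e) (p ^ e) (1 + p ^ f)]%G
   \homg Grp (a : b : (a ^+ (p ^ e), b ^+ (p ^ e), b ^ a = b ^+ (1 + p ^ f))).
  case/existsP: hM => -[a b] /= /eqP [defG an bn ab].
  apply/existsP; exists (b, a); rewrite /= !xpair_eqE joingC defG an bn ab !eqxx //.
rewrite -(hI _ [set: Extremal.gtype (p ^ e) (p ^ e) (1 + p ^ f)]%G) in hM'.
by have := leq_homg hM'; rewrite Extremal.card.
Qed.

Lemma grp_part (gT : finGroupType) (G : {group gT}) (x z : gT) (p e f : nat) :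
  prime p -> (1 <= f <= e)%N -> x ^+ (p ^ e) = 1 -> z ^+ (p ^ e) = 1 ->
  z ^ x = z ^+ (1 + p ^ f) ->
  (p ^ e * p ^ e <= #|<<[set x; z]>>|)%N ->
  <<[set x; z]>> <| G ->
  <<[set x ^+ (p ^ (e - f)); z]>> <| G.
Proof.
move=> pp /andP[f1 fe] xn zn zx cardH nHG.
set H := <<[set x; z]>>%G.
set Z := <[z]>%G; set X := <[x]>%G.
have nZx : X \subset 'N(Z) by rewrite norms_cycle zx groupX // cycle_id.
have nZH : H \subset 'N(Z).
  by rewrite gen_subG subUset !sub1set -!cycle_subG nZx normG.
have defH : H :=: X * Z.
  rewrite -norm_joinEl //; apply/eqP; rewrite eqEsubset; apply/andP; split.
    by rewrite gen_subG subUset !sub1set (subsetP (joing_subl _ _)) ?cycle_id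
      // (subsetP (joing_subr _ _)) ?cycle_id.
  by rewrite join_subG !cycle_subG !mem_gen // !inE eqxx ?orbT.
have oxe : (#[x] %| p ^ e)%N by rewrite order_dvdn xn.
have oze : (#[z] %| p ^ e)%N by rewrite order_dvdn zn.
have pe0 : (0 < p ^ e)%N by rewrite expn_gt0 prime_gt0.
have ox1 := dvdn_leq pe0 oxe.
have oz1 := dvdn_leq pe0 oze.
have mc := mul_cardG X Z.
rewrite -defH -!orderE in mc.
have i0 : (0 < #|X :&: Z|)%N by rewrite cardG_gt0.
have [ox ti] : #[x] = (p ^ e)%N /\ (#|X :&: Z| <= 1)%N.
  move: cardH mc ox1 oz1 i0; rewrite -/H.
  set a := #[x]; set b := #[z]; set c := #|H|; set d := #|X :&: Z|.
  move=> *; split; nia.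
have tiXZ : X :&: Z = 1 by apply: card_le1_trivg.
set N := <<[set x ^+ (p ^ (e - f)); z]>>%G.
have zN : z \in N by rewrite mem_gen // !inE eqxx orbT.
have xN : x ^+ (p ^ (e - f)) \in N by rewrite mem_gen // !inE eqxx.
have xH : x \in H by rewrite mem_gen // !inE eqxx.
have zH : z \in H by rewrite mem_gen // !inE eqxx orbT.
have cz j : coset Z (z ^+ j) = 1 by rewrite coset_id // groupX // cycle_id.
have decomp y : y \in H -> exists i j, y = x ^+ i * z ^+ j.
  rewrite defH => /mulsgP [a c /cycleP [i ->] /cycleP [j ->] ->].
  by exists i, j.
have cosx y : y \in H -> exists i, coset Z y = coset Z x ^+ i.
  move=> /decomp [i [j ->]]; exists i.
  rewrite morphM ?(subsetP nZH) ?groupX //= cz mulg1.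
  by rewrite morphX // (subsetP nZH).
have key y : y \in H -> coset Z y ^+ (p ^ f) = 1 -> y \in N.
  move=> yH; case/decomp: (yH) => i [j defy] hy.
  have cy : coset Z (x ^+ i) ^+ (p ^ f) = 1.
    move: hy; rewrite defy morphM ?(subsetP nZH) ?groupX //=.
    by rewrite cz mulg1.
  have xiZ : x ^+ (i * p ^ f) \in Z.
    apply: coset_idr; first by rewrite (subsetP nZH) ?groupX.
    by rewrite expgM morphX ?(subsetP nZH) ?groupX.
  have : x ^+ (i * p ^ f) \in X :&: Z by rewrite inE xiZ groupX // cycle_id.
  rewrite tiXZ => /set1P xi1.
  have : (#[x] %| i * p ^ f)%N by rewrite order_dvdn xi1.
  rewrite ox.
  have -> : (p ^ e = p ^ (e - f) * p ^ f)%N by rewrite -expnD subnK.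
  rewrite dvdn_pmul2r ?expn_gt0 ?prime_gt0 // => /dvdnP [k ik].
  by rewrite defy ik mulnC expgM groupM // groupX.
have nHg : G \subset 'N(H) := normal_norm nHG.
have sHG : H \subset G := normal_sub nHG.
apply/andP; split.
  by rewrite gen_subG subUset !sub1set !(subsetP sHG) ?groupX.
apply/subsetP => g Gg; rewrite inE -genJ gen_subG conjUg !conjg_set1 subUset !sub1set.
have gN : g \in 'N(H) := subsetP nHg g Gg.
apply/andP; split.
  apply: key; first by rewrite memJ_norm // groupX.
  rewrite -morphX ?(subsetP nZH) ?memJ_norm ?groupX // -conjXg -expgM -expnD.
  by rewrite subnK // xn conj1g morph1.
have wH : z ^ g \in H by rewrite memJ_norm.
have vH : x ^ g \in H by rewrite memJ_norm.
apply: key => //.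
have wv : (z ^ g) ^ (x ^ g) = (z ^ g) ^+ (1 + p ^ f) by rewrite -conjJg zx conjXg.
have [i ci] := cosx _ wH; have [j cj] := cosx _ vH.
have : coset Z ((z ^ g) ^ (x ^ g)) = coset Z (z ^ g).
  rewrite morphJ ?(subsetP nZH) //= ci cj.
  by rewrite /conjg (commuteX2 _ _ (commute_refl _)) mulKg.
rewrite wv morphX ?(subsetP nZH) // add1n expgS => h.
by apply: (mulgI (coset Z (z ^ g))); rewrite mulg1.
Qed.

Lemma part_normal (m n : nat) (D : finType) (R L : {perm D})
    (tl : D -> 'I_m * 'I_n) :
  is_Kmn_map R L tl -> part_stab R L tl <| autp R L.
Proof.
case=> Linv [tlR Rcyc _ Lpart arcs].
have comm g : g \in autp R L -> (forall d, g (R d) = R (g d)) /\ (forall d, g (L d) = L (g d)).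
  move=> /centP cg; split=> d.
    by have := cg R (set21 _ _); move/(congr1 (fun s : {perm D} => s d)); rewrite !permM.
  by have := cg L (set22 _ _); move/(congr1 (fun s : {perm D} => s d)); rewrite !permM.
have tlRk k d : tl ((R ^+ k) d) = tl d.
  by elim: k => [|k IH]; rewrite ?expg0 ?perm1 // expgSr permM tlR.
have vert g d1 d2 : g \in autp R L -> tl d1 = tl d2 -> tl (g d1) = tl (g d2).
  move=> Ag /Rcyc [k <-]; have [cR _] := comm g Ag.
  suff -> : g ((R ^+ k) d1) = (R ^+ k) (g d1) by rewrite tlRk.
  by elim: k => [|k IH]; rewrite ?expg0 ?perm1 // expgSr !permM cR IH.
have part g d1 d2 : g \in autp R L -> (tl d1).1 = (tl d2).1 ->
    (tl (g d1)).1 = (tl (g d2)).1.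
  move=> Ag e12; apply/eqP; apply: contraT => ne.
  have := arcs _ _ ne => c1.
  have : (0 < #|[set d | (tl d == tl (g d1)) && (tl (L d) == tl (g d2))]|)%N
    by rewrite c1.
  case/card_gt0P => d; rewrite inE => /andP [/eqP h1 /eqP h2].
  have Ag' : g^-1 \in autp R L by rewrite groupV.
  have [_ cL'] := comm _ Ag'.
  have t1 : tl ((g^-1) d) = tl d1.
    by rewrite -(permK g d1); apply: vert => //; rewrite permKV h1.
  have t2 : tl (L ((g^-1) d)) = tl d2.
    by rewrite -cL' -(permK g d2); apply: vert => //.
  by have := Lpart ((g^-1) d); rewrite t1 t2 e12 eqxx.
apply/andP; split.
  by apply/subsetP => h; rewrite inE => /andP [].
apply/subsetP => g Ag; rewrite inE; apply/subsetP => y; rewrite mem_conjg => hy.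
have -> : y = (y ^ g^-1) ^ g by rewrite conjgKV.
move: hy; move: (y ^ g^-1) => h; rewrite !inE => /andP [Ah /forallP ph].
rewrite groupJ //=; apply/forallP => d.
have -> : (h ^ g) d = g (h ((g^-1) d)) by rewrite conjgE !permM.
apply/eqP; rewrite -{2}(permKV g d); apply: part => //.
exact: (eqP (ph _)).
Qed.

Theorem lemma3p4 (p e f : nat) (D : finType) (R L : {perm D})
    (tl : D -> 'I_p * 'I_(p ^ e)) (x z : {perm D}) :
  prime p -> odd p -> (1 <= e)%N -> (1 <= f <= e)%N ->
  is_Kmn_map R L tl ->
  orientably_regular R L ->
  x \in part_stab R L tl -> z \in part_stab R L tl ->
  part_stab R L tl = <<[set x; z]>> ->
  x ^+ (p ^ e) = 1 -> z ^+ (p ^ e) = 1 -> z ^ x = z ^+ (1 + p ^ f) ->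
  part_stab R L tl \isog
    Grp (a : b : (a ^+ (p ^ e), b ^+ (p ^ e), b ^ a = b ^+ (1 + p ^ f))) ->
  <<[set x ^+ (p ^ (e - f)); z]>> <| autp R L.
Proof.
move=> pp _ e1 ff kmn _ _ _ defH xn zn zx iso.
have nH := part_normal kmn; rewrite defH in nH iso.
have f1 : (0 < f)%N by case/andP: ff.
have cb := card_bound pp e1 f1 (G := <<[set x; z]>>%G) iso.
exact: grp_part pp ff xn zn zx cb nH.
Qed.
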